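(* Let $X$ be a real-valued random variable and let $f,g:\mathbb{R}\to\mathbb{R}^+$ be bounded increasing functions. Then $$\operatorname{Var}[f(X)g(X)]\;\geq\;\operatorname{Var}[f(X)]\,\mathbb{E}[g(X)^2].$$ *)

(* Defs.v *)
From HB Require Import structures.
From mathcomp Require Import all_boot all_order all_algebra.
From mathcomp Require Import all_classical all_reals all_analysis.

(* Main.v *)
Require Import Defs.
From HB Require Import structures.
From mathcomp Require Import all_boot all_order all_algebra.
From mathcomp Require Import all_classical all_reals all_analysis.
From mathcomp Require Import ring lra measurable_realfun.
Import Order.TTheory GRing.Theory Num.Theory.
Local Open Scope ring_scope.

Definition bm {d} {T : measurableType d} {R : realType} (Y : T -> R) :=
  measurable_fun setT Y /\ exists M : R, forall w, `|Y w| <= M.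

Lemma bm_cst {d} {T : measurableType d} {R : realType} (c : R) : bm (fun _ : T => c).
Proof. by split; [exact: measurable_cst | exists `|c|]. Qed.

Lemma bm_add {d} {T : measurableType d} {R : realType} (Y Z : T -> R) :
  bm Y -> bm Z -> bm (fun w => Y w + Z w).
Proof.
move=> [mY [M HM]] [mZ [N HN]]; split; first exact: measurable_funD.
by exists (M + N) => w; rewrite (le_trans (ler_normD _ _))// lerD.
Qed.

Lemma bm_mul {d} {T : measurableType d} {R : realType} (Y Z : T -> R) :
  bm Y -> bm Z -> bm (fun w => Y w * Z w).
Proof.
move=> [mY [M HM]] [mZ [N HN]]; split; first exact: measurable_funM.
by exists (M * N) => w; rewrite normrM ler_pM.
Qed.

Definition EE {d} {T : measurableType d} {R : realType} (P : probability T R)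
  (Y : T -> R) : R := fine ('E_P[Y])%E.

Lemma bm_Lfun {d} {T : measurableType d} {R : realType} (P : probability T R)
  (Y : T -> R) : bm Y -> Y \in Lfun P 1.
Proof.
move=> [mY [M HM]]; apply/Lfun1_integrable.
apply: measurable_bounded_integrable => //.
  by rewrite -ge0_fin_numE // fin_num_measure.
exists M; split; first exact: num_real.
move=> M' hM' x _; exact: le_trans (HM x) (ltW hM').
Qed.

Lemma EE_E {d} {T : measurableType d} {R : realType} (P : probability T R)
  (Y : T -> R) : bm Y -> ('E_P[Y] = (EE P Y)%:E)%E.
Proof. by move=> hY; rewrite /EE fineK// expectation_fin_num// bm_Lfun. Qed.

Lemma EED {d} {T : measurableType d} {R : realType} (P : probability T R)
  (Y Z : T -> R) : bm Y -> bm Z -> EE P (fun w => Y w + Z w) = EE P Y + EE P Z.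
Proof.
move=> hY hZ; rewrite /EE.
have -> : (fun w => Y w + Z w) = (Y \+ Z) by [].
by rewrite expectationD ?bm_Lfun// (EE_E P _ hY) (EE_E P _ hZ).
Qed.

Lemma EEZ {d} {T : measurableType d} {R : realType} (P : probability T R)
  (k : R) (Y : T -> R) : bm Y -> EE P (fun w => k * Y w) = k * EE P Y.
Proof.
move=> hY; rewrite /EE.
have -> : (fun w => k * Y w) = (k \o* Y) by apply/funext => w; rewrite /GRing.mulr_fun mulrC.
by rewrite expectationZl ?bm_Lfun// (EE_E P _ hY).
Qed.

Lemma EEc {d} {T : measurableType d} {R : realType} (P : probability T R)
  (c : R) : EE P (fun _ => c) = c.
Proof. by rewrite /EE (expectation_cst P c). Qed.

Lemma EE_ge0 {d} {T : measurableType d} {R : realType} (P : probability T R)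
  (Y : T -> R) : (forall w, 0 <= Y w) -> 0 <= EE P Y.
Proof. by move=> h; rewrite /EE fine_ge0// expectation_ge0. Qed.

Lemma EE_ext {d} {T : measurableType d} {R : realType} (P : probability T R)
  (Y Z : T -> R) : (forall w, Y w = Z w) -> EE P Y = EE P Z.
Proof. by move=> h; congr EE; apply/funext. Qed.

Ltac bmt := repeat first [apply: bm_cst | assumption | apply: bm_add | apply: bm_mul].

Lemma disc {R : realType} (a b q : R) : 0 <= b -> 0 <= q ->
  (forall l, 0 <= l ^+ 2 * q - 2 * l * b + a) -> b ^+ 2 <= a * q.
Proof.
move=> b0 q0 H.
have a0 : 0 <= a by have := H 0; rewrite expr0n /= mul0r mulr0 mul0r subr0 add0r.
case/boolP: (q == 0) => [/eqP q00|qn0].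
  subst q; case/boolP: (b == 0) => [/eqP -> |bn0]; first by rewrite expr0n mulr0.
  have := H ((a + 1) / (2 * b)).
  have -> : 2 * ((a + 1) / (2 * b)) * b = a + 1 by field.
  by rewrite mulr0; lra.
have qp : 0 < q by rewrite lt_neqAle eq_sym qn0.
have := H (b / q).
have -> : (b / q) ^+ 2 * q = b ^+ 2 / q by field.
have -> : 2 * (b / q) * b = 2 * (b ^+ 2 / q) by field.
move=> h; have : b ^+ 2 / q <= a by lra.
by rewrite ler_pdivrMr.
Qed.

Lemma core {d} {T : measurableType d} {R : realType} (P : probability T R)
  (F G : T -> R) : bm F -> bm G -> (forall w, 0 <= F w) -> (forall w, 0 <= G w) ->
  (exists c, forall w, 0 <= (G w ^+ 2 - c) * (F w ^+ 2 - EE P F * F w -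
      EE P (fun w => (F w - EE P F) * (F w - EE P F)))) ->
  EE P (fun w => (F w - EE P F) * (F w - EE P F)) * EE P (fun w => G w ^+ 2) <=
  EE P (fun w => (F w * G w - EE P (fun w => F w * G w)) *
                 (F w * G w - EE P (fun w => F w * G w))).
Proof.
move=> bF bG F0 G0 [c Hc].
set a := EE P F in Hc *.
set V := EE P (fun w => (F w - a) * (F w - a)) in Hc *.
set b := EE P (fun w => F w * G w).
have EV : V = EE P (fun w => F w * F w) - a ^+ 2.
  rewrite /V (EE_ext P _ (fun w => F w * F w + (- (2 * a)) * F w + a ^+ 2)); last by move=> w; ring.
  rewrite !EED ?EEZ ?EEc; [|bmt..]. rewrite -/a; ring.
have Es : EE P (fun w => G w ^+ 2) = EE P (fun w => G w * G w).
  by apply: EE_ext => w; rewrite expr2.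
rewrite Es.
have EW : EE P (fun w => (F w * G w - b) * (F w * G w - b)) =
    EE P (fun w => F w * F w * (G w * G w)) - b ^+ 2.
  rewrite (EE_ext P _ (fun w => F w * F w * (G w * G w) + (- (2 * b)) * (F w * G w) + b ^+ 2)); last by move=> w; ring.
  rewrite !EED ?EEZ ?EEc; [|bmt..]. rewrite -/b; ring.
rewrite EW.
have CS : b ^+ 2 <= a * EE P (fun w => F w * (G w * G w)).
  apply: disc.
  - by apply: EE_ge0 => w; rewrite mulr_ge0.
  - by apply: EE_ge0 => w; rewrite !mulr_ge0.
  move=> l.
  have : 0 <= EE P (fun w => F w * (l * G w - 1) ^+ 2).
    by apply: EE_ge0 => w; rewrite mulr_ge0 ?sqr_ge0.
  rewrite (EE_ext P _ (fun w => l ^+ 2 * (F w * (G w * G w)) + (- (2 * l)) * (F w * G w) + F w)); last by move=> w; ring.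
  rewrite !EED ?EEZ; [|bmt..]. rewrite -/a -/b => h; lra.
have TH : 0 <= EE P (fun w => (G w * G w - c) * (F w * F w - a * F w - V)).
  by apply: EE_ge0 => w; have := Hc w; rewrite !expr2.
move: TH.
rewrite (EE_ext P _ (fun w => F w * F w * (G w * G w) + (- a) * (F w * (G w * G w))
   + (- V) * (G w * G w) + (- c) * (F w * F w) + (c * a) * F w + c * V)); last by move=> w; ring.
rewrite !EED ?EEZ ?EEc; [|bmt..]. rewrite -/a => TH.
have e0 : c * EE P (fun w => F w * F w) - c * a * a - c * V = 0 by rewrite EV; ring.
lra.
Qed.

Lemma var_EE {d} {T : measurableType d} {R : realType} (P : probability T R)
  (Y : T -> R) : bm Y ->
  variance P Y = (EE P (fun w => (Y w - EE P Y) * (Y w - EE P Y)))%:E.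
Proof.
move=> hY; rewrite /variance covariance.unlock.
have -> : ((Y \- cst (fine 'E_P[Y])) * (Y \- cst (fine 'E_P[Y])))%R =
  (fun w => (Y w - EE P Y) * (Y w - EE P Y)) by [].
apply: EE_E; bmt.
Qed.

Theorem lemma4p10 (d : measure_display) (T : measurableType d) (R : realType)
  (P : probability T R) (X : {RV P >-> R}) (f g : R -> R)
  (f_ge0 : forall x, 0 <= f x) (g_ge0 : forall x, 0 <= g x)
  (f_bnd : exists M : R, forall x, f x <= M)
  (g_bnd : exists M : R, forall x, g x <= M)
  (f_incr : {homo f : x y / x <= y}) (g_incr : {homo g : x y / x <= y}) :
  (variance P (fun w => f (X w)) * 'E_P[fun w => (g (X w) ^+ 2)%R]
    <= variance P (fun w => (f (X w) * g (X w))%R))%E.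
Proof.
have mf : measurable_fun setT f := nondecreasing_measurable measurableT f_incr.
have mg : measurable_fun setT g := nondecreasing_measurable measurableT g_incr.
have [Mf HMf] := f_bnd; have [Mg HMg] := g_bnd.
have bF : bm (fun w => f (X w)).
  split; first exact: measurableT_comp.
  by exists Mf => w; rewrite ger0_norm.
have bG : bm (fun w => g (X w)).
  split; first exact: measurableT_comp.
  by exists Mg => w; rewrite ger0_norm.
have bG2 : bm (fun w => g (X w) ^+ 2) := bm_mul _ _ bG bG.
rewrite (var_EE P _ bF) (var_EE P _ (bm_mul _ _ bF bG)) (EE_E P _ bG2) -EFinM lee_fin.
apply: core => //.
set a := EE P (fun w => f (X w)).
set V := EE P (fun w => (f (X w) - a) * (f (X w) - a)).
have a0 : 0 <= a by apply: EE_ge0.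
have V0 : 0 <= V by apply: EE_ge0 => w; rewrite -expr2 sqr_ge0.
pose h x := f x ^+ 2 - a * f x - V.
have cross : forall x y, 0 < h x -> x <= y -> 0 < h y.
  move=> x y hx xy; have fxy := f_incr _ _ xy; have fx0 := f_ge0 x.
  rewrite /h in hx *.
  have afx : a < f x by nra.
  nra.
have [c Hc] : exists c, forall x, 0 <= (g x ^+ 2 - c) * h x.
  have [[y0 hy0]|nex] := pselect (exists y, h y <= 0).
  - pose S := [set g y ^+ 2 | y in [set y | h y <= 0]]%classic.
    have hS : has_sup S.
      split; first by exists (g y0 ^+ 2), y0.
      by exists (Mg ^+ 2) => z [y _ <-]; rewrite !expr2 ler_pM.
    exists (sup S) => x.
    case: (lerP (h x) 0) => hx.
    + have gs : g x ^+ 2 <= sup S by apply: sup_upper_bound => //; exists x.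
      nra.
    + have gs : sup S <= g x ^+ 2.
        apply: ge_sup; first by exists (g y0 ^+ 2), y0.
        move=> z [y hy <-].
        have yx : y <= x.
          rewrite leNgt; apply/negP => xy.
          have := cross x y hx (ltW xy); rewrite /= in hy; lra.
        by rewrite !expr2 ler_pM ?g_incr.
      nra.
  - exists 0 => x.
    have hx : 0 < h x.
      by rewrite ltNge; apply/negP => hx; apply: nex; exists x.
    by rewrite subr0 mulr_ge0 ?sqr_ge0 ?ltW.
by exists c => w; exact: Hc (X w).
Qed.
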